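(* Let $k$ be an infinite field of characteristic $0$ and let $W=(L,V)=\big(L(x_1,\dots,x_n),\bigoplus_{i=1}^nA(x_1,\dots,x_n)y_i\big)$ be the free representation with $n$ Lie-algebra generators and $n$ module generators. Then $(L\oplus V,p_V)$, with bracket $[l_1+v_1,l_2+v_2]=[l_1,l_2]+l_1\circ v_2-l_2\circ v_1$ and $p_V(l+v)=v$, is a free Lie algebra with projection-derivation with the $n$ free generators $m_i=x_i+y_i$, $1\le i\le n$.
   Context: $L(x_1,\dots,x_n)$ is the free Lie algebra over $k$, $A(x_1,\dots,x_n)$ the free associative algebra with unit (universal enveloping algebra of it), acting on the free module $\bigoplus_i A(x_1,\dots,x_n)y_i$. A Lie algebra with projection-derivation is a Lie algebra $M$ with linear $p:M\to M$ such that $p^2=p$ and $p[m_1,m_2]=[pm_1,m_2]+[m_1,pm_2]$; homomorphisms are Lie homomorphisms commuting with $p$. Free means: every map of the generators into any Lie algebra with projection-derivation extends uniquely to a homomorphism. *)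

(* Defs.v *)
From HB Require Import structures.
From mathcomp Require Import all_boot all_algebra.
Set Implicit Arguments. Unset Strict Implicit. Unset Printing Implicit Defensive.
Import GRing.Theory.
Local Open Scope ring_scope.

Section Defs.
Variable k : fieldType.

Definition linear_map (A B : lmodType k) (f : A -> B) : Prop :=
  forall (r : k) (a b : A), f (r *: a + b) = r *: f a + f b.

Definition lie_axioms (A : lmodType k) (br : A -> A -> A) : Prop :=
  [/\ forall (r : k) (a b c : A), br (r *: a + b) c = r *: br a c + br b c,
      forall (r : k) (a b c : A), br a (r *: b + c) = r *: br a b + br a c,
      forall a : A, br a a = 0 &
      forall a b c : A, br a (br b c) + br b (br c a) + br c (br a b) = 0].

Definition pd_axioms (A : lmodType k) (br : A -> A -> A) (p : A -> A) : Prop :=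
  [/\ linear_map p,
      forall a : A, p (p a) = p a &
      forall a b : A, p (br a b) = br (p a) b + br a (p b)].

Record lieAlgebra := LieAlgebra {
  lie_sort :> lmodType k;
  lie_br : lie_sort -> lie_sort -> lie_sort;
  lie_ax : lie_axioms lie_br }.

Record liePDAlgebra := LiePDAlgebra {
  lpd_lie :> lieAlgebra;
  lpd_p : lpd_lie -> lpd_lie;
  lpd_ax : pd_axioms (@lie_br lpd_lie) lpd_p }.

Definition lie_morph (A B : lmodType k) (brA : A -> A -> A) (brB : B -> B -> B)
  (f : A -> B) : Prop :=
  linear_map f /\ forall a b : A, f (brA a b) = brB (f a) (f b).

Definition lie_module_axioms (L : lieAlgebra) (M : lmodType k)
  (act : L -> M -> M) : Prop :=
  [/\ forall (r : k) (a b : L) (m : M), act (r *: a + b) m = r *: act a m + act b m,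
      forall (r : k) (a : L) (m m' : M), act a (r *: m + m') = r *: act a m + act a m' &
      forall (a b : L) (m : M),
        act (lie_br a b) m = act a (act b m) - act b (act a m)].

Record lieModule (L : lieAlgebra) := LieModule {
  lmod_sort :> lmodType k;
  lmod_act : L -> lmod_sort -> lmod_sort;
  lmod_ax : lie_module_axioms lmod_act }.

Definition lmod_morph (L : lieAlgebra) (M N : lieModule L) (f : M -> N) : Prop :=
  linear_map f /\ forall (a : L) (m : M), f (lmod_act a m) = lmod_act a (f m).

Definition free_lie_algebra (n : nat) (L : lieAlgebra) (x : 'I_n -> L) : Prop :=
  forall (M : lieAlgebra) (g : 'I_n -> M),
    exists f : L -> M,
      [/\ lie_morph (@lie_br L) (@lie_br M) f,
          forall i, f (x i) = g i &
          forall f' : L -> M, lie_morph (@lie_br L) (@lie_br M) f' ->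
            (forall i, f' (x i) = g i) -> f' =1 f].

Definition free_lie_module (n : nat) (L : lieAlgebra) (V : lieModule L)
  (y : 'I_n -> V) : Prop :=
  forall (M : lieModule L) (g : 'I_n -> M),
    exists f : V -> M,
      [/\ lmod_morph f,
          forall i, f (y i) = g i &
          forall f' : V -> M, lmod_morph f' ->
            (forall i, f' (y i) = g i) -> f' =1 f].

Definition free_lie_pd (n : nat) (A : lmodType k) (br : A -> A -> A)
  (p : A -> A) (m : 'I_n -> A) : Prop :=
  forall (M : liePDAlgebra) (g : 'I_n -> M),
    exists f : A -> M,
      [/\ lie_morph br (@lie_br M) f,
          forall a, f (p a) = lpd_p (f a),
          forall i, f (m i) = g i &
          forall f' : A -> M, lie_morph br (@lie_br M) f' ->
            (forall a, f' (p a) = lpd_p (f' a)) ->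
            (forall i, f' (m i) = g i) -> f' =1 f].

Definition sd_bracket (L : lieAlgebra) (V : lieModule L)
  (u w : (L * V)%type) : (L * V)%type :=
  (lie_br u.1 w.1, lmod_act u.1 w.2 - lmod_act w.1 u.2).

Definition sd_projV (L : lieAlgebra) (V : lieModule L) (u : (L * V)%type)
  : (L * V)%type := (0, u.2).

End Defs.

(* Main.v *)
Require Import Defs.
From mathcomp Require Import all_boot all_algebra.
Import GRing.Theory.
Local Open Scope ring_scope.

Section Lin.
Variable k : fieldType.
Variables A B : lmodType k.
Variable f : A -> B.
Hypothesis hf : linear_map f.
Lemma lm0 : f 0 = 0.
Proof. have := hf 1 0 0; rewrite !scale1r addr0 => /eqP.
by rewrite -subr_eq subrr eq_sym => /eqP. Qed.
Lemma lmD a b : f (a + b) = f a + f b.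
Proof. by have := hf 1 a b; rewrite !scale1r. Qed.
Lemma lmZ r a : f (r *: a) = r *: f a.
Proof. by have := hf r a 0; rewrite !addr0 lm0 addr0. Qed.
Lemma lmN a : f (- a) = - f a.
Proof. by rewrite -scaleN1r lmZ scaleN1r. Qed.
Lemma lmB a b : f (a - b) = f a - f b.
Proof. by rewrite lmD lmN. Qed.
End Lin.
Arguments lm0 {k A B f}.
Arguments lmD {k A B f}.
Arguments lmZ {k A B f}.
Arguments lmN {k A B f}.
Arguments lmB {k A B f}.

Section LieFacts.
Variable k : fieldType.
Variable A : lieAlgebra k.
Local Notation br := (@lie_br k A).
Lemma linl c : linear_map (fun a : A => br a c).
Proof. by case: (lie_ax A) => h _ _ _ r a b; apply: h. Qed.
Lemma linr c : linear_map (br c).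
Proof. by case: (lie_ax A) => _ h _ _ r a b; apply: h. Qed.
Lemma brC a b : br a b = - br b a.
Proof.
case: (lie_ax A) => _ _ h0 _.
have := h0 (a + b); rewrite (lmD (linl _)) !(lmD (linr _)) !h0 add0r addr0.
by move/eqP; rewrite addr_eq0 => /eqP.
Qed.
Lemma brl r a b c : br (r *: a + b) c = r *: br a c + br b c.
Proof. exact: (linl c). Qed.
Lemma brr r a b c : br c (r *: a + b) = r *: br c a + br c b.
Proof. exact: (linr c). Qed.
Lemma br0l c : br 0 c = 0. Proof. exact: (lm0 (linl c)). Qed.
Lemma br0r c : br c 0 = 0. Proof. exact: (lm0 (linr c)). Qed.
Lemma brDl a b c : br (a + b) c = br a c + br b c. Proof. exact: (lmD (linl c)). Qed.
Lemma brDr a b c : br c (a + b) = br c a + br c b. Proof. exact: (lmD (linr c)). Qed.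
Lemma brBl a b c : br (a - b) c = br a c - br b c. Proof. exact: (lmB (linl c)). Qed.
Lemma brBr a b c : br c (a - b) = br c a - br c b. Proof. exact: (lmB (linr c)). Qed.
Lemma brNr a c : br c (- a) = - br c a. Proof. exact: (lmN (linr c)). Qed.
Lemma brJ a b c : br a (br b c) + br b (br c a) + br c (br a b) = 0.
Proof. by case: (lie_ax A). Qed.
End LieFacts.
Arguments linl {k A}.
Arguments linr {k A}.
Arguments brC {k A}.
Arguments brJ {k A}.
Arguments brl {k A}.
Arguments brr {k A}.
Arguments br0l {k A}.
Arguments br0r {k A}.
Arguments brDl {k A}.
Arguments brDr {k A}.
Arguments brBl {k A}.
Arguments brBr {k A}.
Arguments brNr {k A}.

Lemma jac6 (V : zmodType) (X1 X2 X3 X4 X5 X6 : V) :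
  (X1 - X2 - (X3 - X4)) + (X3 - X5 - (X6 - X2)) + (X6 - X4 - (X1 - X5)) = 0.
Proof.
rewrite !opprB !addrA.
rewrite (ACl ((1*12)*(2*7)*(3*10)*(4*5)*(6*11)*(8*9)))%AC /=.
by rewrite subrr addNr subrr addNr addNr addNr !addr0.
Qed.

Section ModFacts.
Variable k : fieldType.
Variable L : lieAlgebra k.
Variable V : lieModule L.
Local Notation act := (@lmod_act k L V).
Lemma alinl m : linear_map (fun a : L => act a m).
Proof. by case: (lmod_ax V) => h _ _ r a b; apply: h. Qed.
Lemma alinr a : linear_map (act a).
Proof. by case: (lmod_ax V) => _ h _ r m m'; apply: h. Qed.
Lemma actl r a b m : act (r *: a + b) m = r *: act a m + act b m.
Proof. exact: (alinl m). Qed.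
Lemma actr r a m m' : act a (r *: m + m') = r *: act a m + act a m'.
Proof. exact: (alinr a). Qed.
Lemma act0l m : act 0 m = 0. Proof. exact: (lm0 (alinl m)). Qed.
Lemma act0r a : act a 0 = 0. Proof. exact: (lm0 (alinr a)). Qed.
Lemma actBr a m m' : act a (m - m') = act a m - act a m'. Proof. exact: (lmB (alinr a)). Qed.
Lemma actbr a b m : act (lie_br a b) m = act a (act b m) - act b (act a m).
Proof. by case: (lmod_ax V). Qed.
End ModFacts.
Arguments alinl {k L V}.
Arguments alinr {k L V}.
Arguments actbr {k L V}.

Lemma pair_ext (k : fieldType) (A B : lmodType k) (u w : (A * B)%type) :
  u.1 = w.1 -> u.2 = w.2 -> u = w.
Proof. by case: u w => ? ? [? ?] /= -> ->. Qed.

Lemma part1 (k : fieldType) (L : lieAlgebra k) (V : lieModule L) :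
  lie_axioms (@sd_bracket k L V).
Proof.
split.
- move=> r [a al] [b be] [c ga]; apply: pair_ext; rewrite /sd_bracket /=.
    exact: brl.
  rewrite actl actr.
  by rewrite scalerDr scalerN opprD addrACA.
- move=> r [a al] [b be] [c ga]; apply: pair_ext; rewrite /sd_bracket /=.
    exact: brr.
  rewrite actl actr.
  by rewrite scalerDr scalerN opprD addrACA.
- move=> [a al]; apply: pair_ext; rewrite /sd_bracket /=.
    by case: (lie_ax L).
  by rewrite subrr.
- move=> [a al] [b be] [c ga]; apply: pair_ext; rewrite /sd_bracket /=.
    exact: brJ.
  rewrite !actBr !actbr; exact: jac6.
Qed.

Lemma part2 (k : fieldType) (L : lieAlgebra k) (V : lieModule L) :
  pd_axioms (@sd_bracket k L V) (@sd_projV k L V).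
Proof.
split.
- move=> r [a al] [b be]; apply: pair_ext; rewrite /sd_projV /=.
    by rewrite scaler0 addr0.
  by [].
- by [].
- move=> [a al] [b be]; apply: pair_ext; rewrite /sd_bracket /sd_projV /=.
    by rewrite br0l br0r addr0.
  by rewrite !act0l sub0r subr0 addrC.
Qed.

Lemma part3 (k : fieldType) (two_nz : (2%:R : k) != 0) n (L : lieAlgebra k)
  (x : 'I_n -> L) (L_free : free_lie_algebra x) (V : lieModule L)
  (y : 'I_n -> V) (V_free : free_lie_module y) :
  free_lie_pd (@sd_bracket k L V) (@sd_projV k L V) (fun i => (x i, y i)).
Proof.
move=> M g.
have [plin pp pder] := lpd_ax M.
set p := lpd_p (l:=M) in plin pp pder *.
have pq0 : forall a b : M, lie_br (p a) (p b) = 0.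
  move=> a b; set q := lie_br (p a) (p b).
  have h1 : p q = q + q by rewrite /q pder !pp.
  have h2 : p (p q) = p q := pp q.
  rewrite h1 (lmD plin) h1 in h2.
  have h3 : q + q = 0.
    by move/esym/eqP: h2; rewrite -subr_eq subrr eq_sym => /eqP.
  apply/eqP; move: h3; rewrite -mulr2n -scaler_nat => /eqP.
  by rewrite scaler_eq0 (negbTE two_nz).
have [phi [[philin phibr] phix phiu]] := L_free (lpd_lie M) (fun i => g i - p (g i)).
have pphi0 : forall l, p (phi l) = 0.
  have e := phiu (fun l => phi l - p (phi l)).
  move=> l.
  have h : p (phi l) = phi l - (phi l - p (phi l)) by rewrite opprB addrC subrK.
  rewrite h e ?subrr //.
  - split.
      move=> r a b /=; rewrite philin plin scalerBr.
      by rewrite opprD addrACA.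
    move=> a b /=; rewrite phibr pder brBl !brBr pq0 subr0.
    by rewrite opprD addrA addrAC.
  - by move=> i /=; rewrite phix (lmB plin) pp subrr subr0.
have Max : lie_module_axioms (fun (a : L) (m : lie_sort M) => lie_br (phi a) m).
  split.
  - by move=> r a b m; rewrite philin brl.
  - by move=> r a m m'; rewrite brr.
  - move=> a b m; rewrite phibr.
    have J := brJ (phi a) (phi b) m.
    rewrite (brC m (phi a)) (brC m (lie_br (phi a) (phi b))) brNr in J.
    by apply/eqP; rewrite eq_sym -subr_eq0; apply/eqP.
pose Mmod := @LieModule k L (lie_sort M) _ Max.
have [psi [[psilin psiact] psiy psiu]] := V_free Mmod (fun i => p (g i)).
have ppsi : forall v, p (psi v) = psi v.
  have e := psiu (fun v => p (psi v)).
  move=> v; rewrite e //.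
  - split.
      by move=> r a b /=; rewrite psilin plin.
    by move=> a m /=; rewrite psiact /= pder pphi0 br0l add0r.
  - by move=> i /=; rewrite psiy pp.
exists (fun u : L * V => phi u.1 + psi u.2); split.
- split.
    move=> r [a al] [b be] /=.
    by rewrite philin psilin scalerDr addrACA.
  move=> [a al] [b be]; rewrite /sd_bracket /=.
  rewrite phibr (lmB psilin) !psiact /= brDl !brDr.
  rewrite -(ppsi al) -(ppsi be) pq0 !ppsi (brC (psi al) (phi b)).
  by rewrite addr0 addrA.
- move=> [a al] /=; rewrite /sd_projV /=.
  by rewrite (lm0 philin) add0r (lmD plin) pphi0 add0r ppsi.
- by move=> i /=; rewrite phix psiy subrK.
move=> f' [f'lin f'br] f'p f'm [a al] /=.
have ephi : forall l, f' (l, 0) = phi l.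
  apply: (phiu (fun l => f' (l, 0))).
  - split.
      move=> r l1 l2 /=; rewrite -f'lin; congr f'.
      by apply: pair_ext => /=; rewrite ?scaler0 ?addr0.
    move=> l1 l2 /=; rewrite -f'br; congr f'.
    by apply: pair_ext; rewrite /sd_bracket //= !act0r subrr.
  - move=> i /=.
    have -> : ((x i, 0) : L * V) = (x i, y i) - sd_projV (x i, y i).
      by apply: pair_ext; rewrite /sd_projV /= ?subr0 ?subrr.
    by rewrite (lmB f'lin) f'p f'm.
have epsi : forall v, f' (0, v) = psi v.
  apply: (psiu (fun v => f' (0, v))).
  - split.
      move=> r l1 l2 /=; rewrite -f'lin; congr f'.
      by apply: pair_ext => /=; rewrite ?scaler0 ?addr0.
    move=> l v /=; rewrite -ephi -f'br; congr f'.
    by apply: pair_ext; rewrite /sd_bracket /= ?br0r ?act0l ?subr0.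
  - move=> i /=.
    have -> : ((0, y i) : L * V) = sd_projV (x i, y i) by [].
    by rewrite f'p f'm.
have -> : ((a, al) : L * V) = (a, 0) + (0, al).
  by apply: pair_ext => /=; rewrite ?addr0 ?add0r.
by rewrite (lmD f'lin) ephi epsi.
Qed.

Theorem theorem3 (k : fieldType)
  (k_char0 : [pchar k] =i pred0)
  (k_infinite : forall s : seq k, exists a : k, a \notin s)
  (n : nat)
  (L : lieAlgebra k) (x : 'I_n -> L) (L_free : free_lie_algebra x)
  (V : lieModule L) (y : 'I_n -> V) (V_free : free_lie_module y) :
  [/\ lie_axioms (@sd_bracket k L V),
      pd_axioms (@sd_bracket k L V) (@sd_projV k L V) &
      free_lie_pd (@sd_bracket k L V) (@sd_projV k L V)
        (fun i => (x i, y i))].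
Proof.
have two_nz : (2%:R : k) != 0.
  apply/negP => h; have [q hq] := natf0_pchar (isT : (0 < 2)%N) h.
  by rewrite k_char0 in hq.
split; [exact: part1 | exact: part2 | exact: part3].
Qed.
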